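(* Let $n,m$ be positive integers, let $A_1,\dots,A_m\in\mathbb{S}_n$, and let $\mathcal{A}:\mathbb{S}_n\to\mathbb{R}^m$, $\mathcal{A}(X)=(\langle A_i,X\rangle)_{i=1}^m$, with adjoint $\mathcal{A}^*(y)=\sum_{i=1}^m y_iA_i$. Assume $\mathcal{A}\mathcal{A}^*$ is invertible. Let $b\in\mathbb{R}^m$, $C\in\mathbb{S}_n$, and $D:=\mathcal{A}^*\big((\mathcal{A}\mathcal{A}^* )^{-1}b\big)$. Assume that the problem $$\inf_{y\in\mathbb{R}^m} b^{\intercal}y\quad\text{s.t.}\quad S=\mathcal{A}^*(y)-C\succeq 0,\ \operatorname{diag}(S)=\mathbf{1}\qquad(\mathrm{DSDP})$$ admits a KKT point (defined in the context). Let $0<\sigma_{\min}<\sigma_{\max}$ and let $\{\varepsilon_k\}_{k\in\mathbb{N}},\{\tau_k\}_{k\in\mathbb{N}}\subseteq(0,\infty)$ satisfy $\sum_{k=0}^\infty\varepsilon_k<\infty$ and $\sum_{k=0}^\infty\tau_k<\infty$. Consider sequences generated as follows: $y^0=0$, $\widetilde{X}^0=0$, and for $k=0,1,2,\dots$: choose $\sigma_k\in[\sigma_{\min},\sigma_{\max}]$, a positive integer $p_{k+1}$ and a matrix $Y^{k+1}\in\mathbb{R}^{n\times p_{k+1}}$ all of whose rows have Euclidean norm $1$; set $S^{k+1}=Y^{k+1}(Y^{k+1})^{\intercal}$, $y^{k+1}=(\mathcal{A}\mathcal{A}^* )^{-1}\mathcal{A}(S^{k+1}+C)$, $\widetilde{X}^{k+1}=\widetilde{X}^k-\sigma_k\big(\mathcal{A}^*(y^{k+1})-S^{k+1}-C\big)$,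 $z^{k+1}=\operatorname{diag}\big((\widetilde{X}^{k+1}+D)S^{k+1}\big)$, $X^{k+1}=\widetilde{X}^{k+1}+D-\operatorname{Diag}(z^{k+1})$; and suppose $Y^{k+1}$ satisfies the stopping criterion $$\|X^{k+1}Y^{k+1}\|\le\varepsilon_k\quad\text{and}\quad\lambda_{\min}(X^{k+1})\ge-\tau_k .$$ Let $(\hat S,\hat y,\hat X,\hat z)$ be a limit point of $\{(S^k,y^k,X^k,z^k)\}_{k\ge1}$. Then $(\hat S,\hat y,\hat X,\hat z)$ is a KKT point of (DSDP).
   Context: $\mathbb{S}_n$ is the space of real symmetric $n\times n$ matrices, $\mathbb{S}_n^+$ its PSD cone; $\langle A,B\rangle=\mathrm{Tr}(A^{\intercal}B)$ and $\|\cdot\|$ is the Frobenius norm. For a square matrix $M$, $\operatorname{diag}(M)$ is the vector of its diagonal entries; for a vector $z$, $\operatorname{Diag}(z)$ is the diagonal matrix with diagonal $z$; $\mathbf{1}$ is the all-ones vector; $\lambda_{\min}$ denotes the smallest eigenvalue. A KKT point of (DSDP) is a tuple $(S,y,X,z)\in\mathbb{S}_n\times\mathbb{R}^m\times\mathbb{S}_n\times\mathbb{R}^n$ with $S=\mathcal{A}^*(y)-C$, $S\succeq0$, $\operatorname{diag}(S)=\mathbf{1}$, $X\succeq0$, $\langle X,S\rangle=0$, and $\mathcal{A}(X+\operatorname{Diag}(z))=b$. In the paper's algorithm, $Y^{k+1}$ is obtained by approximately minimizing $Y\mapsto L_{\sigma_k}(YY^{\intercal},y^k,\widetilde{X}^k)$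 over matrices with unit-norm rows, where $L_\sigma(S,y,\widetilde{X})=\langle D,S+C\rangle-\langle\widetilde{X},\mathcal{A}^*(y)-S-C\rangle+\frac{\sigma}{2}\|\mathcal{A}^*(y)-S-C\|^2$; the result only uses the stopping criterion stated. *)

(* Defs.v *)
From HB Require Import structures.
From mathcomp Require Import all_boot all_order all_algebra.
From mathcomp Require Import all_classical all_reals all_analysis.
Set Implicit Arguments. Unset Strict Implicit. Unset Printing Implicit Defensive.
Import Order.TTheory GRing.Theory Num.Theory.
Import numFieldNormedType.Exports.
Local Open Scope ring_scope.

Section Defs.
Variable R : realType.

Definition mxinner (p q : nat) (A B : 'M[R]_(p, q)) : R := \tr (A^T *m B).

Definition frob (p q : nat) (M : 'M[R]_(p, q)) : R :=
  Num.sqrt (\sum_(i < p) \sum_(j < q) M i j ^+ 2).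

Definition symmx (n : nat) (M : 'M[R]_n) : Prop := M^T = M.

Definition psd (n : nat) (M : 'M[R]_n) : Prop :=
  symmx M /\ forall v : 'cV[R]_n, 0 <= (v^T *m M *m v) 0 0.

Definition mdiag (n : nat) (M : 'M[R]_n) : 'cV[R]_n := \col_i M i i.
Definition Diag (n : nat) (z : 'cV[R]_n) : 'M[R]_n := diag_mx z^T.

Definition Aop (n m : nat) (A : 'I_m -> 'M[R]_n) (X : 'M[R]_n) : 'cV[R]_m :=
  \col_i mxinner (A i) X.
Definition Aadj (n m : nat) (A : 'I_m -> 'M[R]_n) (y : 'cV[R]_m) : 'M[R]_n :=
  \sum_(i < m) y i 0 *: A i.

Definition AAt (n m : nat) (A : 'I_m -> 'M[R]_n) : 'M[R]_m :=
  \matrix_(i, j) mxinner (A i) (A j).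

Definition kkt (n m : nat) (A : 'I_m -> 'M[R]_n) (b : 'cV[R]_m) (C : 'M[R]_n)
  (S : 'M[R]_n) (y : 'cV[R]_m) (X : 'M[R]_n) (z : 'cV[R]_n) : Prop :=
  S = Aadj A y - C /\ psd S /\ mdiag S = const_mx 1 /\ psd X /\
  mxinner X S = 0 /\ Aop A (X + Diag z) = b.

End Defs.

(* Main.v *)
Require Import Defs.
From HB Require Import structures.
From mathcomp Require Import all_boot all_order all_algebra.
From mathcomp Require Import all_classical all_reals all_analysis.
From mathcomp Require Import spectral sesquilinear complex.
From mathcomp Require Import ring lra.
Import Order.TTheory GRing.Theory Num.Theory.
Import numFieldNormedType.Exports.
Local Open Scope classical_set_scope.
Local Open Scope ring_scope.

Section Spec.
Local Open Scope sesquilinear_scope.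
Section Gen.
Variable C : numClosedFieldType.

Lemma spec_tr n (A B : 'M[C]_n) (c : C) :
  A \is hermsymmx ->
  (forall a, eigenvalue A a -> a \is Num.real -> c <= a) ->
  (forall u : 'rV[C]_n, 0 <= (u *m B *m u ^t*) 0 0) ->
  c * \tr B <= \tr (A *m B).
Proof.
move=> Ah Aeig Bpsd.
set P := spectralmx A; set d := spectral_diag A.
have AE : A = invmx P *m diag_mx d *m P.
  by apply/orthomx_spectralP/hermitian_normalmx.
have Pu : P \is unitarymx := spectral_unitarymx A.
have iP : invmx P = P ^t* := invmx_unitary Pu.
have PPt : P *m P ^t* = 1%:M := unitarymxP Pu.
have PtP : P ^t* *m P = 1%:M by rewrite -iP mulVmx // spectral_unit.
have dreal : forall i, d 0 i \is Num.real.
  by move=> i; apply: (mxOverP (hermitian_spectral_diag_real Ah)).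
have PA : P *m A = diag_mx d *m P.
  by rewrite AE iP !mulmxA PPt mul1mx.
have deig : forall i, eigenvalue A (d 0 i).
  move=> i; apply/eigenvalueP; exists (row i P).
    by rewrite -row_mul PA; apply/rowP => j; rewrite mul_diag_mx !mxE.
  apply/eqP => r0.
  have : row i (P *m P ^t*) = 0 by rewrite row_mul r0 mul0mx.
  rewrite PPt => /rowP /(_ i); rewrite !mxE eqxx /= => /eqP.
  by rewrite oner_eq0.
set Q := P *m B *m P ^t*.
have trQ : \tr Q = \tr B.
  by rewrite /Q mxtrace_mulC mulmxA PtP mul1mx.
have QE : \tr (A *m B) = \tr (diag_mx d *m Q).
  by rewrite AE iP -!mulmxA mxtrace_mulC /Q !mulmxA.
have Qii : forall i, 0 <= Q i i.
  move=> i.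
  have -> : Q i i = (row i P *m B *m (row i P) ^t*) 0 0.
    rewrite -row_mul -row_mul /Q.
    rewrite !mxE; apply: eq_bigr => j _; rewrite !mxE.
    done.
  exact: Bpsd.
rewrite QE -trQ !mulr_sumr /mxtrace; apply: ler_sum => i _.
rewrite mul_diag_mx [X in _ <= X]mxE; apply: (ler_wpM2r (Qii i)).
by apply: Aeig; [exact: deig | exact: dreal].
Qed.
End Gen.

Section Real.
Variable R : realType.
Local Notation C := (R[i]).
Local Notation toC := (real_complex R).
Definition mxC m n (M : 'M[R]_(m, n)) : 'M[C]_(m, n) := map_mx toC M.
Arguments mxC {m n}.

Lemma toC_real (x : R) : toC x \is Num.real.
Proof. by rewrite complex_real. Qed.

Lemma conj_toC (x : R) : Num.conj (toC x) = toC x.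
Proof. by rewrite conj_Creal // toC_real. Qed.

Lemma mxC_tc m n (M : 'M[R]_(m, n)) : (mxC M) ^t* = mxC M^T.
Proof. by apply/matrixP => i j; rewrite !mxE conj_toC. Qed.

Lemma mxCM m n p (M : 'M[R]_(m, n)) (N : 'M[R]_(n, p)) :
  mxC (M *m N) = mxC M *m mxC N.
Proof. exact: map_mxM. Qed.

Lemma mxC_tr n (M : 'M[R]_n) : \tr (mxC M) = toC (\tr M).
Proof. exact: trace_map_mx. Qed.

Lemma herm_mxC n (X : 'M[R]_n) : X^T = X -> mxC X \is hermsymmx.
Proof.
move=> hX; apply/is_hermitianmxP; rewrite expr0 scale1r.
by rewrite mxC_tc hX.
Qed.

Lemma eig_mxC n (X : 'M[R]_n) r : eigenvalue (mxC X) (toC r) -> eigenvalue X r.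
Proof.
by rewrite !eigenvalue_root_char /mxC -map_char_poly fmorph_root.
Qed.

Lemma eig_bnd n (X : 'M[R]_n) (c : R) (B : 'M[C]_n) :
  X^T = X -> (forall r, eigenvalue X r -> c <= r) ->
  (forall u : 'rV[C]_n, 0 <= (u *m B *m u ^t*) 0 0) ->
  toC c * \tr B <= \tr (mxC X *m B).
Proof.
move=> hX heig hB; apply: spec_tr => //; first exact: herm_mxC.
move=> a ha areal.
have aE : a = toC (complex.Re a) by rewrite RRe_real.
rewrite aE lecR; apply: heig; apply: eig_mxC; by rewrite -aE.
Qed.

Lemma m11E (M : 'M[C]_(1, 1)) (N : 'M[C]_(1, 1)) : (M *m N) 0 0 = M 0 0 * N 0 0.
Proof. by rewrite mxE big_ord1. Qed.

Lemma Q1c n (X : 'M[R]_n) (c : R) :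
  X^T = X -> (forall r, eigenvalue X r -> c <= r) ->
  forall u : 'rV[C]_n, toC c * (u *m u ^t*) 0 0 <= (u *m mxC X *m u ^t*) 0 0.
Proof.
move=> hX heig u.
have := @eig_bnd n X c (u ^t* *m u) hX heig.
rewrite mxtrace_mulC trace_mx11 mulmxA mxtrace_mulC trace_mx11 !mulmxA; apply.
move=> w.
have -> : w *m (u ^t* *m u) *m w ^t* = (w *m u ^t*) *m (w *m u ^t*) ^t*.
  by rewrite !mulmxA trmx_mul map_mxM trmxCK mulmxA.
rewrite m11E.
have -> : ((w *m u ^t*) ^t*) 0 0 = Num.conj ((w *m u ^t*) 0 0) by rewrite !mxE.
exact: mul_conjC_ge0.
Qed.


Lemma Q1 n (X : 'M[R]_n) (c : R) :
  X^T = X -> (forall r, eigenvalue X r -> c <= r) ->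
  forall v : 'cV[R]_n, c * (v^T *m v) 0 0 <= (v^T *m X *m v) 0 0.
Proof.
move=> hX heig v.
have := @Q1c n X c hX heig (mxC v^T).
by rewrite mxC_tc trmxK -!mxCM !mxE -rmorphM lecR.
Qed.

Lemma Q2 n (S : 'M[R]_n) : S^T = S ->
  (forall v : 'cV[R]_n, 0 <= (v^T *m S *m v) 0 0) ->
  forall r, eigenvalue S r -> 0 <= r.
Proof.
move=> _ hS r /eigenvalueP [v hv vn0].
have := hS v^T; rewrite trmxK hv -scalemxAl mxE.
have spos : 0 < (v *m v^T) 0 0.
  rewrite mxE lt_def; apply/andP; split; last first.
    by apply: sumr_ge0 => j _; rewrite mxE -expr2 sqr_ge0.
  apply: contra vn0 => /eqP H0.
  have hnn : forall j : 'I_n, true -> 0 <= v 0 j * v^T j 0.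
    by move=> j _; rewrite mxE -expr2 sqr_ge0.
  have H := psumr_eq0P hnn H0.
  apply/eqP/rowP => j; rewrite [RHS]mxE.
  have := H j isT; rewrite mxE => /eqP; rewrite -expr2 sqrf_eq0 => /eqP.
  by [].
by rewrite pmulr_lge0.
Qed.


Lemma Q3 n (X S : 'M[R]_n) (c : R) :
  X^T = X -> (forall r, eigenvalue X r -> c <= r) ->
  S^T = S -> (forall v : 'cV[R]_n, 0 <= (v^T *m S *m v) 0 0) ->
  c * \tr S <= \tr (S *m X).
Proof.
move=> hX heig hS hSp.
have hB : forall u : 'rV[C]_n, 0 <= (u *m (mxC X - toC c *: 1%:M) *m u ^t*) 0 0.
  move=> u; rewrite mulmxBr mulmxBl -scalemxAr mulmx1 -scalemxAl.
  have h := @Q1c n X c hX heig u; rewrite -subr_ge0 in h.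
  by move: h; rewrite !mxE.
have := @eig_bnd n S 0 (mxC X - toC c *: 1%:M) hS (@Q2 n S hS hSp) hB.
rewrite rmorph0 mul0r mulmxBr -scalemxAr mulmx1 linearB linearZ /=.
rewrite -mxCM !mxC_tr /= -rmorphM -rmorphB ler0c subr_ge0.
by rewrite mulrC.
Qed.

End Real.

End Spec.

Section Alg.
Variable R : realType.
Implicit Types p q n m : nat.

Lemma mxinnerE {p q} (M N : 'M[R]_(p,q)) :
  mxinner M N = \sum_i \sum_j M i j * N i j.
Proof.
rewrite /mxinner /mxtrace.
under eq_bigr do rewrite mxE.
rewrite exchange_big /=; apply: eq_bigr => i _; apply: eq_bigr => j _.
by rewrite mxE.
Qed.

Lemma ipC {p q} (M N : 'M[R]_(p,q)) : mxinner M N = mxinner N M.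
Proof.
rewrite !mxinnerE; apply: eq_bigr => i _; apply: eq_bigr => j _; exact: mulrC.
Qed.

Lemma ipDr {p q} (M N1 N2 : 'M[R]_(p,q)) :
  mxinner M (N1 + N2) = mxinner M N1 + mxinner M N2.
Proof.
rewrite !mxinnerE -big_split; apply: eq_bigr => i _.
rewrite -big_split; apply: eq_bigr => j _; by rewrite mxE mulrDr.
Qed.

Lemma ipBr {p q} (M N1 N2 : 'M[R]_(p,q)) :
  mxinner M (N1 - N2) = mxinner M N1 - mxinner M N2.
Proof.
rewrite !mxinnerE -sumrB; apply: eq_bigr => i _.
rewrite -sumrB; apply: eq_bigr => j _; by rewrite !mxE mulrBr.
Qed.

Lemma ipZr {p q} (M N : 'M[R]_(p,q)) a :
  mxinner M (a *: N) = a * mxinner M N.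
Proof.
rewrite !mxinnerE mulr_sumr; apply: eq_bigr => i _.
rewrite mulr_sumr; apply: eq_bigr => j _; by rewrite !mxE mulrCA.
Qed.

Lemma ipDl {p q} (M1 M2 N : 'M[R]_(p,q)) :
  mxinner (M1 + M2) N = mxinner M1 N + mxinner M2 N.
Proof. by rewrite ipC ipDr ![mxinner N _]ipC. Qed.

Lemma ipBl {p q} (M1 M2 N : 'M[R]_(p,q)) :
  mxinner (M1 - M2) N = mxinner M1 N - mxinner M2 N.
Proof. by rewrite ipC ipBr ![mxinner N _]ipC. Qed.

Lemma ipZl {p q} (M N : 'M[R]_(p,q)) a :
  mxinner (a *: M) N = a * mxinner M N.
Proof. by rewrite ipC ipZr ipC. Qed.

Lemma ip_sumr {p q} I (r : seq I) (P : pred I) (M : 'M[R]_(p,q)) F :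
  mxinner M (\sum_(i <- r | P i) F i) = \sum_(i <- r | P i) mxinner M (F i).
Proof.
elim/big_rec2: _ => [|i x y _ <-]; last by rewrite ipDr.
by rewrite mxinnerE big1 // => i _; rewrite big1 // => j _; rewrite mxE mulr0.
Qed.

Lemma ip_suml {p q} I (r : seq I) (P : pred I) (M : 'M[R]_(p,q)) F :
  mxinner (\sum_(i <- r | P i) F i) M = \sum_(i <- r | P i) mxinner (F i) M.
Proof. by rewrite ipC ip_sumr; apply: eq_bigr => i _; rewrite ipC. Qed.

Lemma ip_ge0 {p q} (M : 'M[R]_(p,q)) : 0 <= mxinner M M.
Proof.
by rewrite mxinnerE; apply: sumr_ge0 => i _; apply: sumr_ge0 => j _; rewrite -expr2 sqr_ge0.
Qed.

Lemma frobE {p q} (M : 'M[R]_(p,q)) : frob M ^+ 2 = mxinner M M.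
Proof.
rewrite /frob sqr_sqrtr; last by apply: sumr_ge0 => i _; apply: sumr_ge0 => j _; rewrite sqr_ge0.
by rewrite mxinnerE; apply: eq_bigr => i _; apply: eq_bigr => j _; rewrite expr2.
Qed.

Lemma ip_expand {p q} (P r : 'M[R]_(p,q)) s :
  mxinner (P - s *: r) (P - s *: r) =
  mxinner P P - 2 * s * mxinner r P + s ^+ 2 * mxinner r r.
Proof.
rewrite !ipBl !ipBr !ipZl !ipZr [mxinner P r]ipC; ring.
Qed.

Lemma CS {p q} (M N : 'M[R]_(p,q)) e s :
  0 < e -> 0 < s -> mxinner M M <= e ^+ 2 -> mxinner N N = s ^+ 2 ->
  mxinner M N <= e * s.
Proof.
move=> e0 s0 hM hN.
have := ip_ge0 (N - (s / e) *: M); rewrite ip_expand hN.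
set x := mxinner M N; set t := s / e.
have te : t * e = s by rewrite /t mulfVK // gt_eqF.
have t0 : 0 < t by rewrite /t divr_gt0.
move=> h.
have h2 : t ^+ 2 * mxinner M M <= t ^+ 2 * e ^+ 2 by rewrite ler_wpM2l // sqr_ge0.
have h3 : 2 * t * x <= 2 * (s * s).
  rewrite -te; move: h h2; rewrite -te => h h2. nra.
nra.
Qed.


Lemma Aop_add {n m} (A : 'I_m -> 'M[R]_n) M N : Aop A (M + N) = Aop A M + Aop A N.
Proof. by apply/colP => i; rewrite !mxE ipDr. Qed.
Lemma Aop_sub {n m} (A : 'I_m -> 'M[R]_n) M N : Aop A (M - N) = Aop A M - Aop A N.
Proof. by apply/colP => i; rewrite !mxE ipBr. Qed.
Lemma Aop_scale {n m} (A : 'I_m -> 'M[R]_n) a M : Aop A (a *: M) = a *: Aop A M.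
Proof. by apply/colP => i; rewrite !mxE ipZr. Qed.

Lemma Aop_Aadj {n m} (A : 'I_m -> 'M[R]_n) w : Aop A (Aadj A w) = AAt A *m w.
Proof.
apply/colP => i; rewrite !mxE /Aadj ip_sumr; apply: eq_bigr => l _.
by rewrite ipZr !mxE mulrC.
Qed.

Lemma ip_Aadj {n m} (A : 'I_m -> 'M[R]_n) w M :
  mxinner (Aadj A w) M = \sum_l w l 0 * (Aop A M) l 0.
Proof.
rewrite /Aadj ip_suml; apply: eq_bigr => l _; by rewrite ipZl mxE.
Qed.

Lemma ip_Aadj0 {n m} (A : 'I_m -> 'M[R]_n) w M :
  Aop A M = 0 -> mxinner (Aadj A w) M = 0.
Proof.
by move=> h; rewrite ip_Aadj big1 // => l _; rewrite h mxE mulr0.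
Qed.

Lemma Aadj_sub {n m} (A : 'I_m -> 'M[R]_n) w1 w2 :
  Aadj A (w1 - w2) = Aadj A w1 - Aadj A w2.
Proof.
rewrite /Aadj -sumrB; apply: eq_bigr => l _; by rewrite !mxE scalerBl.
Qed.

Lemma Aadj_sym {n m} (A : 'I_m -> 'M[R]_n) w :
  (forall i, symmx (A i)) -> (Aadj A w)^T = Aadj A w.
Proof.
move=> hA; apply/matrixP => i j; rewrite !mxE /Aadj !summxE.
apply: eq_bigr => l _; rewrite !mxE.
by have := hA l; rewrite /symmx => /matrixP /(_ i j); rewrite mxE => ->.
Qed.

Lemma ip_Diag {n} (M : 'M[R]_n) w :
  mxinner M (Diag w) = \sum_i M i i * w i 0.
Proof.
rewrite mxinnerE; apply: eq_bigr => i _.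
rewrite (bigD1 i) //= big1 ?addr0; first by rewrite !mxE eqxx mulr1n.
by move=> j hj; rewrite !mxE eq_sym (negbTE hj) mulr0n mulr0.
Qed.

Lemma Diag_sym {n} (w : 'cV[R]_n) : (Diag w)^T = Diag w.
Proof. exact: tr_diag_mx. Qed.

Lemma ip_symE {n} (S X : 'M[R]_n) : S^T = S -> mxinner S X = \tr (S *m X).
Proof. by rewrite /mxinner => ->. Qed.

End Alg.

Section Lim.
Variable R : realType.

Lemma mx_entry_cvg {p q} {f : nat -> 'M[R]_(p,q)} {M : 'M[R]_(p,q)} i j :
  f @ \oo --> M -> (fun k => f k i j) @ \oo --> M i j.
Proof.
move=> fM.
have : (fun N : 'M[R]_(p,q) => N i j) @ M --> M i j.
  move=> A hA.
  exists (fun i' j' => if (i' == i) && (j' == j) then A else setT).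
    move=> i' j'; case: ifP => [/andP [/eqP -> /eqP ->] //| _]; exact: filterT.
  by move=> N /(_ i j); rewrite !eqxx.
move=> h; exact: (cvg_comp _ _ fM h).
Qed.


Lemma cvg_sumR (I : finType) (f : I -> nat -> R) (a : I -> R) :
  (forall i, f i @ \oo --> a i) ->
  (fun k => \sum_i f i k) @ \oo --> \sum_i a i.
Proof.
move=> h; apply: (@cvg_big _ _ +%R 0 predT _ _ _ _ _ _) => //.
  exact: add_continuous.
Qed.

Lemma lim_le {f g : nat -> R} {a b : R} :
  f @ \oo --> a -> g @ \oo --> b -> (forall k, f k <= g k) -> a <= b.
Proof.
move=> fa gb hfg.
apply: (ler_cvg_to fa gb); by near=> k; apply: hfg.
Unshelve. all: by end_near.
Qed.

Lemma lim_uniq {f : nat -> R} {a b : R} : f @ \oo --> a -> f @ \oo --> b -> a = b.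
Proof.
move=> fa fb; apply/eqP; rewrite eq_le; apply/andP; split.
  by apply: (lim_le fa fb) => k.
by apply: (lim_le fb fa) => k.
Qed.

Lemma phi_oo (phi : nat -> nat) : (forall k, (phi k < phi k.+1)%N) ->
  phi @ \oo --> \oo.
Proof.
move=> hphi.
have hge : forall k, (k <= phi k)%N.
  elim=> [|k IH] //; exact: (leq_ltn_trans IH (hphi k)).
apply/cvgnyPge => A; exists A => // k /= hk.
exact: leq_trans hk (hge k).
Qed.


Lemma qformE n (v : 'cV[R]_n) (M : 'M[R]_n) :
  (v^T *m M *m v) 0 0 = \sum_i \sum_j v i 0 * M i j * v j 0.
Proof.
rewrite mxE; under eq_bigr do rewrite mxE.
rewrite exchange_big /=; apply: eq_bigr => i _.
rewrite mulr_suml; apply: eq_bigr => j _; rewrite !mxE mulrAC.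
done.
Qed.

Lemma cvg_qform {n} (v : 'cV[R]_n) {f : nat -> 'M[R]_n} {M : 'M[R]_n} :
  f @ \oo --> M -> (fun k => (v^T *m f k *m v) 0 0) @ \oo --> (v^T *m M *m v) 0 0.
Proof.
move=> h; under eq_fun do rewrite qformE; rewrite qformE.
apply: cvg_sumR => i; apply: cvg_sumR => j.
apply: cvgM; last exact: cvg_cst.
apply: cvgM; first exact: cvg_cst.
exact: mx_entry_cvg.
Qed.

Lemma cvg_ip {p q} {f g : nat -> 'M[R]_(p,q)} {M N : 'M[R]_(p,q)} :
  f @ \oo --> M -> g @ \oo --> N ->
  (fun k => mxinner (f k) (g k)) @ \oo --> mxinner M N.
Proof.
move=> hf hg; under eq_fun do rewrite mxinnerE; rewrite mxinnerE.
apply: cvg_sumR => i; apply: cvg_sumR => j.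
by apply: cvgM; exact: mx_entry_cvg.
Qed.

Lemma entry_le_ip {p q} (M : 'M[R]_(p,q)) i j : M i j ^+ 2 <= mxinner M M.
Proof.
rewrite mxinnerE (bigD1 i) //= (bigD1 j) //= -expr2 -addrA lerDl.
apply: addr_ge0.
  by apply: sumr_ge0 => k _; rewrite -expr2 sqr_ge0.
by apply: sumr_ge0 => k _; apply: sumr_ge0 => l _; rewrite -expr2 sqr_ge0.
Qed.
End Lim.
Arguments mx_entry_cvg {R p q f M} i j.
Arguments lim_le {R f g a b}.
Arguments lim_uniq {R f a b}.
Arguments cvg_qform {R n} v {f M}.
Arguments cvg_ip {R p q f g M N}.
Arguments entry_le_ip {R p q} M i j.
Arguments cvg_sumR {R I f a}.

Theorem theorem5p1 (R : realType) (n m : nat) (A : 'I_m -> 'M[R]_n)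
  (b : 'cV[R]_m) (C : 'M[R]_n)
  (sigma_min sigma_max : R) (eps tau : nat -> R)
  (sigma : nat -> R) (p : nat -> nat) (Y : forall k, 'M[R]_(n, p k))
  (S : nat -> 'M[R]_n) (y : nat -> 'cV[R]_m) (Xt : nat -> 'M[R]_n)
  (z : nat -> 'cV[R]_n) (X : nat -> 'M[R]_n)
  (Shat : 'M[R]_n) (yhat : 'cV[R]_m) (Xhat : 'M[R]_n) (zhat : 'cV[R]_n) :
  (0 < n)%N -> (0 < m)%N ->
  (forall i, symmx (A i)) ->
  AAt A \in unitmx ->
  symmx C ->
  (exists S0 y0 X0 z0, kkt A b C S0 y0 X0 z0) ->
  0 < sigma_min -> sigma_min < sigma_max ->
  (forall k, 0 < eps k) -> (forall k, 0 < tau k) ->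
  cvg (series eps @ \oo) -> cvg (series tau @ \oo) ->
  let D := Aadj A (invmx (AAt A) *m b) in
  y 0%N = 0 -> Xt 0%N = 0 ->
  (forall k, sigma_min <= sigma k <= sigma_max) ->
  (forall k, (0 < p k.+1)%N) ->
  (forall k (i : 'I_n), \sum_(j < p k.+1) Y k.+1 i j ^+ 2 = 1) ->
  (forall k, S k.+1 = Y k.+1 *m (Y k.+1)^T) ->
  (forall k, y k.+1 = invmx (AAt A) *m Aop A (S k.+1 + C)) ->
  (forall k, Xt k.+1 = Xt k - sigma k *: (Aadj A (y k.+1) - S k.+1 - C)) ->
  (forall k, z k.+1 = mdiag ((Xt k.+1 + D) *m S k.+1)) ->
  (forall k, X k.+1 = Xt k.+1 + D - Diag (z k.+1)) ->
  (forall k, frob (X k.+1 *m Y k.+1) <= eps k) ->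
  (forall k (a : R), eigenvalue (X k.+1) a -> - tau k <= a) ->
  (* (Shat, yhat, Xhat, zhat) is a limit point of {(S^k,y^k,X^k,z^k)}_{k>=1} *)
  (exists phi : nat -> nat, (forall k, (phi k < phi k.+1)%N) /\
     (fun k => (S (phi k).+1, y (phi k).+1, X (phi k).+1, z (phi k).+1))
       @ \oo --> (Shat, yhat, Xhat, zhat)) ->
  kkt A b C Shat yhat Xhat zhat.
Proof.
move=> n0 m0 Asym AAu Csym [S0 [y0 [X0 [z0 [hS0 [pS0 [dS0 [pX0 [cX0 hAX0]]]]]]]]].
move=> smin0 sminmax eps0 tau0 ceps ctau D y0e Xt0 hsig hp hY hS hy hXt hz hX hXY htau.
move=> [phi [phimono hcv]].
have Aop0 : Aop A 0 = 0 by apply/colP => i; rewrite !mxE mxinnerE big1 // => j _; rewrite big1 // => l _; rewrite mxE mulr0.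
have AD : Aop A D = b by rewrite /D Aop_Aadj mulKVmx.
have AXt : forall k, Aop A (Xt k) = 0.
  elim=> [|k IH]; first by rewrite Xt0 Aop0.
  rewrite hXt Aop_sub Aop_scale IH -addrA -opprD Aop_sub Aop_Aadj hy mulKVmx //.
  by rewrite subrr scaler0 subr0.
have feas : forall k, Aop A (X k.+1 + Diag (z k.+1)) = b.
  by move=> k; rewrite hX subrK Aop_add AXt AD add0r.
have Ssym : forall k, (S k.+1)^T = S k.+1 by move=> k; rewrite hS trmx_mul trmxK.
have Dsym : D^T = D by rewrite /D Aadj_sym.
have Xtsym : forall k, (Xt k)^T = Xt k.
  elim=> [|k IH]; first by rewrite Xt0 trmx0.
  by rewrite hXt linearB /= linearZ /= !linearB /= IH Aadj_sym // Ssym Csym.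
have Xsym : forall k, (X k.+1)^T = X k.+1.
  by move=> k; rewrite hX linearB /= linearD /= Xtsym Dsym Diag_sym.
have Spsd : forall k, psd (S k.+1).
  move=> k; split; first exact: Ssym.
  move=> v; rewrite hS mulmxA.
  have -> : v^T *m Y k.+1 *m (Y k.+1)^T *m v = (v^T *m Y k.+1) *m (v^T *m Y k.+1)^T.
    by rewrite trmx_mul trmxK mulmxA.
  rewrite mxE; apply: sumr_ge0 => j _; rewrite [X in _ * X]mxE -expr2; exact: sqr_ge0.
have Sdiag : forall k i, S k.+1 i i = 1.
  move=> k i; rewrite hS mxE -(hY k i); apply: eq_bigr => j _; rewrite !mxE; ring.
have S0sym : S0^T = S0 by case: pS0.
have S0diag : forall i, S0 i i = 1.
  by move=> i; have := congr1 (fun M : 'cV[R]_n => M i 0) dS0; rewrite !mxE.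
have trS0 : \tr S0 = n%:R.
  by rewrite /mxtrace (eq_bigr (fun _ => 1)) ?sumr_const ?card_ord // => i _; rewrite S0diag.
have X0eig : forall r, eigenvalue X0 r -> 0 <= r.
  by case: pX0 => h1 h2; exact: (@Q2 R n X0 h1 h2).
have ipSX : forall k, `|mxinner (S k.+1) (X k.+1)| <= eps k * Num.sqrt n%:R.
  move=> k.
  have -> : mxinner (S k.+1) (X k.+1) = mxinner (X k.+1 *m Y k.+1) (Y k.+1).
    rewrite ip_symE // hS /mxinner mxtrace_mulC trmx_mul Xsym !mulmxA.
    by rewrite mxtrace_mulC !mulmxA.
  have hM : mxinner (X k.+1 *m Y k.+1) (X k.+1 *m Y k.+1) <= eps k ^+ 2.
    rewrite -frobE; have := hXY k; have : 0 <= frob (X k.+1 *m Y k.+1) by apply: sqrtr_ge0.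
    move=> h1 h2; nra.
  have hN : mxinner (Y k.+1) (Y k.+1) = Num.sqrt n%:R ^+ 2.
    rewrite sqr_sqrtr ?ler0n // mxinnerE.
    rewrite (eq_bigr (fun _ => 1)) ?sumr_const ?card_ord // => i _.
    by rewrite -(hY k i); apply: eq_bigr => j _; rewrite expr2.
  have sn0 : 0 < Num.sqrt (n%:R : R) by rewrite sqrtr_gt0 ltr0n.
  rewrite ler_norml; apply/andP; split; last exact: CS.
  rewrite lerNl -mulN1r -ipZl; apply: CS => //.
  by rewrite ipZl ipZr !mulN1r opprK.
set W := X0 + Diag z0 - D.
pose V := fun k => Xt k - W.
pose r := fun k => S k.+1 + C - Aadj A (y k.+1).
have Vstep : forall k, V k = V k.+1 - sigma k *: r k.
  move=> k; rewrite /V /r hXt; apply/matrixP => i j; rewrite !mxE; ring.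
have AW : Aop A W = 0 by rewrite /W Aop_sub hAX0 AD subrr.
have AV : forall k, Aop A (V k) = 0 by move=> k; rewrite /V Aop_sub AXt AW subrr.
have ipb : forall k, mxinner (r k) (V k.+1) <= eps k * Num.sqrt n%:R + tau k * n%:R.
  move=> k.
  have rE : r k = (S k.+1 - S0) + Aadj A (y0 - y k.+1).
    rewrite /r Aadj_sub hS0; apply/matrixP => i j; rewrite !mxE; ring.
  have VE : V k.+1 = (X k.+1 - X0) + (Diag (z k.+1) - Diag z0).
    rewrite /V /W hX; set dz := Diag (z k.+1); set dz0 := Diag z0.
    apply/matrixP => i j; rewrite !mxE; ring.
  rewrite rE ipDl ip_Aadj0 ?AV // addr0 VE ipDr [X in _ + X]ipBr !ip_Diag.
  have sumz : forall w : 'cV[R]_n, \sum_i (S k.+1 - S0) i i * w i 0 = 0.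
    by move=> w; apply: big1 => i _; rewrite !mxE Sdiag S0diag subrr mul0r.
  rewrite !sumz.
  rewrite subrr addr0 ipBl !ipBr.
  have h1 : mxinner (S k.+1) (X k.+1) <= eps k * Num.sqrt n%:R.
    by have := ipSX k; rewrite ler_norml => /andP [].
  have h2 : 0 <= mxinner (S k.+1) X0.
    rewrite ip_symE //; have := @Q3 R n X0 (S k.+1) 0 (proj1 pX0) X0eig (Ssym k) (proj2 (Spsd k)).
    by rewrite mul0r.
  have h3 : - tau k * n%:R <= mxinner S0 (X k.+1).
    rewrite ip_symE //; have := @Q3 R n (X k.+1) S0 (- tau k) (Xsym k) (htau k) S0sym (proj2 pS0).
    by rewrite trS0.
  have h4 : mxinner S0 X0 = 0 by rewrite ipC.
  lra.
pose q := fun k => mxinner (r k) (r k).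
pose a := fun k => mxinner (V k) (V k).
pose dlt := fun k => eps k * Num.sqrt n%:R + tau k * n%:R.
have q0 : forall k, 0 <= q k by move=> k; exact: ip_ge0.
have a0 : forall k, 0 <= a k by move=> k; exact: ip_ge0.
have sqn0 : 0 <= Num.sqrt (n%:R : R) by apply: sqrtr_ge0.
have dlt0 : forall k, 0 <= dlt k.
  move=> k; apply: addr_ge0; apply: mulr_ge0 => //; apply: ltW => //.
have fej : forall k, sigma_min ^+ 2 * q k <= a k - a k.+1 + 2 * sigma_max * dlt k.
  move=> k.
  have e := @ip_expand R n n (V k.+1) (r k) (sigma k); rewrite -Vstep in e.
  have /andP [hs1 hs2] := hsig k.
  have s0 : 0 <= sigma k by apply: le_trans hs1; apply: ltW.
  have hsq : sigma_min ^+ 2 * q k <= sigma k ^+ 2 * q k.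
    apply: ler_wpM2r; first exact: q0.
    by rewrite lerXn2r // ?nnegrE; apply: ltW.
  have hb : 2 * sigma k * mxinner (r k) (V k.+1) <= 2 * sigma_max * dlt k.
    have := ipb k; rewrite -/(dlt k) => hi.
    apply: (@le_trans _ _ (2 * sigma k * dlt k)).
      by apply: ler_wpM2l => //; apply: mulr_ge0.
    by apply: ler_wpM2r => //; apply: ler_wpM2l.
  rewrite /a /q; lra.
have tele : forall N, sigma_min ^+ 2 * series q N <= a 0%N - a N + 2 * sigma_max * series dlt N.
  elim=> [|N IH]; first by rewrite /series /= !big_geq // subrr !mulr0 addr0.
  rewrite !seriesSr [in X in X <= _]mulrDr [in X in _ <= X]mulrDr; move: IH; have := fej N; lra.
have Le := nondecreasing_cvgn_le (nondecreasing_series (P := predT) (m := 0%N) (fun k _ _ => ltW (eps0 k))) ceps.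
have Lt := nondecreasing_cvgn_le (nondecreasing_series (P := predT) (m := 0%N) (fun k _ _ => ltW (tau0 k))) ctau.
have sm2 : 0 < sigma_min ^+ 2 by rewrite exprn_gt0.
have smax0 : 0 <= 2 * sigma_max by rewrite mulr_ge0 // ltW // (lt_trans smin0).
have hub : has_ubound (range (series q)).
  exists ((a 0%N + 2 * sigma_max * (limn (series eps) * Num.sqrt n%:R + limn (series tau) * n%:R)) / sigma_min ^+ 2).
  move=> _ [N _ <-].
  have sd : series dlt N = series eps N * Num.sqrt n%:R + series tau N * n%:R.
    by rewrite /series /= big_split /= -!mulr_suml.
  have hE : series eps N * Num.sqrt n%:R <= limn (series eps) * Num.sqrt n%:R.
    exact: ler_wpM2r (Le N).
  have hT : series tau N * n%:R <= limn (series tau) * n%:R.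
    exact: ler_wpM2r (Lt N).
  have hET : 2 * sigma_max * (series eps N * Num.sqrt n%:R + series tau N * n%:R) <=
     2 * sigma_max * (limn (series eps) * Num.sqrt n%:R + limn (series tau) * n%:R).
    by apply: ler_wpM2l => //; apply: lerD.
  have := tele N; rewrite sd ler_pdivlMr // mulrC.
  have := a0 N; lra.
have cq : cvgn (series q).
  apply: nondecreasing_is_cvgn hub.
  exact: (nondecreasing_series (P := predT) (m := 0%N) (fun k _ _ => q0 k)).
have qlim : q @ \oo --> 0 := cvg_series_cvg_0 cq.
have taulim : tau @ \oo --> 0 := cvg_series_cvg_0 ctau.
have epslim : eps @ \oo --> 0 := cvg_series_cvg_0 ceps.
have phioo := phi_oo _ phimono.
have qphi : (fun k => q (phi k)) @ \oo --> 0 := cvg_comp _ _ phioo qlim.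
have tauphi : (fun k => tau (phi k)) @ \oo --> 0 := cvg_comp _ _ phioo taulim.
have epsphi : (fun k => eps (phi k)) @ \oo --> 0 := cvg_comp _ _ phioo epslim.
have cS : (fun k => S (phi k).+1) @ \oo --> Shat by exact: (cvg_comp _ _ (cvg_comp _ _ (cvg_comp _ _ hcv cvg_fst) cvg_fst) cvg_fst).
have cy : (fun k => y (phi k).+1) @ \oo --> yhat by exact: (cvg_comp _ _ (cvg_comp _ _ (cvg_comp _ _ hcv cvg_fst) cvg_fst) cvg_snd).
have cX : (fun k => X (phi k).+1) @ \oo --> Xhat by exact: (cvg_comp _ _ (cvg_comp _ _ hcv cvg_fst) cvg_snd).
have cz : (fun k => z (phi k).+1) @ \oo --> zhat by exact: (cvg_comp _ _ hcv cvg_snd).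
have Aadj_entry : forall (w : 'cV[R]_m) i j, (Aadj A w) i j = \sum_l w l 0 * A l i j.
  by move=> w i j; rewrite /Aadj summxE; apply: eq_bigr => l _; rewrite mxE.
have symlim : forall (f : nat -> 'M[R]_n) (M : 'M[R]_n), f @ \oo --> M -> (forall k, (f k)^T = f k) -> M^T = M.
  move=> f M hf hs; apply/matrixP => i j; rewrite mxE.
  apply: (lim_uniq (mx_entry_cvg j i hf)).
  have -> : (fun k => f k j i) = (fun k => f k i j).
    by apply/funext => k; rewrite -{1}(hs k) mxE.
  exact: mx_entry_cvg.
rewrite /kkt; split; [|split; [|split; [|split; [|split]]]].
- suff L0 : forall i j, (Shat + C - Aadj A yhat) i j = 0.
    apply/matrixP => i j; have := L0 i j; rewrite !mxE => h; lra.
  move=> i j.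
  have cr : (fun k => r (phi k) i j) @ \oo --> (Shat + C - Aadj A yhat) i j.
    rewrite /r; under eq_fun do rewrite !mxE Aadj_entry; rewrite !mxE Aadj_entry.
    apply: cvgB; first by apply: cvgD; [exact: mx_entry_cvg | exact: cvg_cst].
    apply: cvg_sumR => l; apply: cvgM; last exact: cvg_cst.
    exact: mx_entry_cvg.
  have : (Shat + C - Aadj A yhat) i j * (Shat + C - Aadj A yhat) i j <= 0.
    apply: (lim_le (cvgM cr cr) qphi) => k /=.
    by have := entry_le_ip (r (phi k)) i j; rewrite expr2.
  move=> h; nra.
- split; first by apply: (symlim _ _ cS) => k; exact: Ssym.
  move=> v; apply: (lim_le (cvg_cst 0) (cvg_qform v cS)) => k.
  exact: (proj2 (Spsd _)).
- apply/colP => i; rewrite !mxE; apply: (lim_uniq (mx_entry_cvg i i cS)).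
  have -> : (fun k => S (phi k).+1 i i) = (fun _ => 1) by apply/funext => k; exact: Sdiag.
  exact: cvg_cst.
- split; first by apply: (symlim _ _ cX) => k; exact: Xsym.
  move=> v.
  have ct : (fun k => - tau (phi k) * (v^T *m v) 0 0) @ \oo --> 0.
    have := cvgM (cvgN tauphi) (cvg_cst ((v^T *m v) 0 0)); rewrite oppr0 mul0r; exact.
  apply: (lim_le ct (cvg_qform v cX)) => k.
  exact: (@Q1 R n (X (phi k).+1) (- tau (phi k)) (Xsym _) (htau _) v).
- have cip : (fun k => mxinner (X (phi k).+1) (S (phi k).+1)) @ \oo --> mxinner Xhat Shat.
    exact: cvg_ip.
  have ce : (fun k => eps (phi k) * Num.sqrt n%:R) @ \oo --> 0.
    have := cvgM epsphi (cvg_cst (Num.sqrt (n%:R : R))); rewrite mul0r; exact.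
  have ce' : (fun k => - (eps (phi k) * Num.sqrt n%:R)) @ \oo --> 0.
    have := cvgN ce; rewrite oppr0; exact.
  apply/eqP; rewrite eq_le; apply/andP; split.
    apply: (lim_le cip ce) => k; rewrite ipC.
    by have := ipSX (phi k); rewrite ler_norml => /andP [].
  apply: (lim_le ce' cip) => k; rewrite ipC.
  by have := ipSX (phi k); rewrite ler_norml => /andP [].
- apply/colP => i; rewrite mxE ipDr ip_Diag.
  apply: (lim_uniq (f := fun k => mxinner (A i) (X (phi k).+1) + \sum_l A i l l * z (phi k).+1 l 0)).
    apply: cvgD; first exact: cvg_ip (cvg_cst _) cX.
    apply: cvg_sumR => l; apply: cvgM; first exact: cvg_cst.
    exact: mx_entry_cvg.
  have -> : (fun k => mxinner (A i) (X (phi k).+1) + \sum_l A i l l * z (phi k).+1 l 0) = (fun _ => b i 0).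
    apply/funext => k; rewrite -ip_Diag -ipDr.
    by have := congr1 (fun M : 'cV[R]_m => M i 0) (feas (phi k)); rewrite mxE.
  exact: cvg_cst.
Qed.
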